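(* Let $\mathcal{P}$ be a nonempty finite poset, $m=\max_{p\in\mathcal{P}}(|{\downarrow}p|+|{\uparrow}p|)$, and let $\mathcal{A},\mathcal{B}$ be nonempty dual families of downsets over $\mathcal{L}(\mathcal{P})$, with $N=|\mathcal{A}|+|\mathcal{B}|$. Then at least one of the following holds: (i) there is $p\in\mathcal{P}$ with $\mathrm{freq}_{\mathcal{A}}(p)\ge\frac{1}{m\log_{4/3}N}$; (ii) there is $p\in\mathcal{P}$ with $\mathrm{freq}_{\overline{\mathcal{B}}}(p)\ge\frac{1}{m^2\log_{4/3}N}$.
   Context: For a finite poset $\mathcal{P}$, $\mathcal{L}(\mathcal{P})$ is the lattice of all downsets of $\mathcal{P}$ ordered by inclusion. ${\downarrow}p=\{q:q\le p\}$, ${\uparrow}p=\{q:q\ge p\}$. Two families $\mathcal{A},\mathcal{B}$ of downsets of $\mathcal{P}$ are dual over $\mathcal{L}(\mathcal{P})$ if $A\not\subseteq B$ for all $A\in\mathcal{A},B\in\mathcal{B}$, and for every downset $X$ of $\mathcal{P}$ either $X\subseteq B$ for some $B\in\mathcal{B}$ or $A\subseteq X$ for some $A\in\mathcal{A}$. For a family $\mathcal{C}$ of subsets of $\mathcal{P}$, $\mathrm{freq}_{\mathcal{C}}(p)=|\{C\in\mathcal{C}:p\in C\}|/|\mathcal{C}|$, and $\overline{\mathcal{C}}=\{\mathcal{P}\setminus C: C\in\mathcal{C}\}$, so $\mathrm{freq}_{\overline{\mathcal{B}}}(p)=|\{B\in\mathcal{B}:p\notin B\}|/|\mathcal{B}|$.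 *)

(* Defs.v *)
From HB Require Import structures.
From mathcomp Require Import all_boot all_order.
From Stdlib Require Import Reals.
Set Implicit Arguments. Unset Strict Implicit. Unset Printing Implicit Defensive.
Import Order.TTheory.

Definition is_downset (d : Order.disp_t) (T : finPOrderType d) (X : {set T}) : Prop :=
  forall x y : T, (y <= x)%O -> x \in X -> y \in X.

Definition dual_families (d : Order.disp_t) (T : finPOrderType d)
    (A B : {set {set T}}) : Prop :=
  (forall X Y, X \in A -> Y \in B -> ~~ (X \subset Y)) /\
  (forall X : {set T}, is_downset X ->
     (exists2 Y, Y \in B & X \subset Y) \/ (exists2 Z, Z \in A & Z \subset X)).

Definition updown_size (d : Order.disp_t) (T : finPOrderType d) (p : T) : nat :=
  (#|[set q : T | (q <= p)%O]| + #|[set q : T | (p <= q)%O]|)%N.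

Definition max_updown (d : Order.disp_t) (T : finPOrderType d) : nat :=
  (\max_(p : T) updown_size p)%N.

Definition freq (T : finType) (C : {set {set T}}) (p : T) : R :=
  (INR #|[set X in C | p \in X]| / INR #|C|)%R.

Definition compl_family (T : finType) (C : {set {set T}}) : {set {set T}} :=
  [set ~: X | X in C].

Definition log43 (x : R) : R := (ln x / ln (4/3))%R.

(* Main.v *)
Require Import Defs.
From HB Require Import structures.
From mathcomp Require Import all_boot all_order all_algebra.
From mathcomp Require Import Rstruct.
From Stdlib Require Import Reals Lra Classical.
Set Implicit Arguments. Unset Strict Implicit. Unset Printing Implicit Defensive.
Import Order.TTheory GRing.Theory Num.Theory.
Section Comb.
Variables (d : Order.disp_t) (T : finPOrderType d).

Definition upS (z : T) : {set T} := [set y | (z <= y)%O].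
Definition dnS (z : T) : {set T} := [set y | (y <= z)%O].
Definition Xof (H : {set T}) : {set T} := [set x | ~~ (upS x \subset H)].

Lemma upS_le z : (#|upS z| <= max_updown T)%nat.
Proof.
apply: leq_trans (leq_bigmax z); rewrite /updown_size leq_addl //.
Qed.

Lemma dnS_le z : (#|dnS z| <= max_updown T)%nat.
Proof.
apply: leq_trans (leq_bigmax z); rewrite /updown_size leq_addr //.
Qed.

Lemma Xof_down H : is_downset (Xof H).
Proof.
move=> x y yx; rewrite !inE; apply: contra => sH.
apply: subset_trans sH; apply/subsetP => u; rewrite !inE => xu.
exact: le_trans yx xu.
Qed.

Lemma card_bigcup_le (S : {set T}) (f : T -> {set T}) :
  (#|\bigcup_(w in S) f w| <= \sum_(w in S) #|f w|)%nat.
Proof.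
elim/big_rec2: _ => [|i U n _ IH]; first by rewrite cards0.
apply: leq_trans (leq_add (leqnn _) IH).
by rewrite cardsU leq_subr.
Qed.

Definition disj_up (M : {set T}) :=
  forall z z', z \in M -> z' \in M -> z != z' -> [disjoint upS z & upS z'].

Lemma greedy (A : {set T}) : exists M : {set T},
  [/\ M \subset A, disj_up M &
      (#|A| <= #|M| * (max_updown T * max_updown T))%nat].
Proof.
move: {2}#|A| (leqnn #|A|) => n; elim: n A => [|n IH] A hA.
  exists set0; split; [exact: sub0set| by move=> z z'; rewrite inE|].
  by move: hA; rewrite leqn0 => /eqP ->.
case: (set_0Vmem A) => [->|[z zA]].
  exists set0; split; [exact: sub0set| by move=> z z'; rewrite inE|].
  by rewrite cards0.
pose C := \bigcup_(w in upS z) dnS w.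
have zC : z \in C by apply/bigcupP; exists z; rewrite inE.
have hA' : (#|A :\: C| <= n)%nat.
  have : (#|A :\: C| < #|A|)%nat.
    apply: proper_card; rewrite properEneq subsetDl andbT.
    apply/eqP => e; have : z \in A :\: C by rewrite e.
    by rewrite inE zC.
  by move=> h; rewrite -ltnS; apply: leq_trans h hA.
have [M [sM dM cM]] := IH _ hA'.
have zM : z \notin M by apply/negP => /(subsetP sM); rewrite inE zC.
exists (z |: M); split.
- by rewrite subUset sub1set zA (subset_trans sM) ?subsetDl.
- have key : forall z', z' \in M -> [disjoint upS z & upS z'].
    move=> z' z'M; apply/pred0P => w /=; apply/negP => /andP [w1 w2].
    have := subsetP sM _ z'M; rewrite inE => /andP [/negP nC _]; apply: nC.
    apply/bigcupP; exists w => //; by move: w2; rewrite !inE.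
  move=> u v; rewrite !inE => /predU1P [->|uM] /predU1P [->|vM]; rewrite ?eqxx // => neq.
  all: try (by apply: key). all: try (by rewrite disjoint_sym; apply: key). all: try (by apply: dM).
- rewrite cardsU1 zM mulSn.
  have hC : (#|C| <= max_updown T * max_updown T)%nat.
    apply: leq_trans (card_bigcup_le _ _) _.
    apply: leq_trans (_ : \sum_(w in upS z) max_updown T <= _)%nat.
      by apply: leq_sum => w _; exact: dnS_le.
    by rewrite sum_nat_const mulnC leq_mul // upS_le.
  rewrite -(setID A C) cardsU.
  apply: leq_trans (leq_subr _ _) _.
  apply: leq_add => //.
  exact: leq_trans (subset_leq_card (subsetIr _ _)) hC.
Qed.

Lemma count_hit (F : {set {set T}}) (S : {set T}) :
  (forall X, X \in F -> ~~ [disjoint X & S]) ->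
  (#|F| <= \sum_(p in S) #|[set X in F | p \in X]|)%nat.
Proof.
move=> hF.
have e : forall p, #|[set X in F | p \in X]| = (\sum_(X in F) (p \in X))%nat.
  move=> p; rewrite -sum1_card big_mkcond /= [RHS]big_mkcond /=.
  by apply: eq_bigr => X _; rewrite inE; case: (X \in F); case: (p \in X).
under eq_bigr do rewrite e.
rewrite exchange_big /= -sum1_card; apply: leq_sum => X XF.
have := hF _ XF; case/pred0Pn => p /andP [pX pS].
rewrite (bigD1 p) //=.
have pX' : p \in X := pX. by rewrite pX'.
Qed.

End Comb.
Section Prob.
Variables (T : finType) (r : R).
Local Open Scope ring_scope.

Definition wt (H : {set T}) : R := \prod_(t : T) (if t \in H then r else 1 - r).

Definition indep (S : {set T}) (psi : {set T} -> R) :=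
  forall H, psi H = psi (H :\: S).

Lemma indep_sub (S S' : {set T}) (psi : {set T} -> R) : S' \subset S -> indep S psi -> indep S' psi.
Proof.
move=> sS h H; rewrite [RHS]h h setDDl.
by congr (psi (_ :\: _)); apply/esym/setUidPr.
Qed.

Definition tg (t : T) (H : {set T}) := if t \in H then H :\ t else t |: H.

Lemma tgK t : involutive (tg t).
Proof.
move=> H; rewrite /tg; case tH: (t \in H); rewrite !inE ?eqxx /=.
  by rewrite setD1K.
by rewrite setU1K // tH.
Qed.

Lemma tgD1 t H : tg t H :\ t = H :\ t.
Proof.
rewrite /tg; case: ifP => _; first by rewrite setDDl setUid.
apply/setP => x; rewrite !inE; by case: (x == t).
Qed.

Lemma lem1 t (psi : {set T} -> R) : indep [set t] psi ->
  \sum_H wt H * psi H * (t \in H)%:R = r * \sum_H wt H * psi H.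
Proof.
move=> hp.
pose w' (H : {set T}) := \prod_(s | s != t) (if s \in H then r else 1 - r).
have ew H : wt H = (if t \in H then r else 1 - r) * w' H by rewrite /wt (bigD1 t).
pose G (H : {set T}) := w' H * psi H.
have GD H : G (H :\ t) = G H.
  rewrite /G [psi H]hp; congr (_ * _).
  apply: eq_bigr => s st; by rewrite !inE st.
have Gtg H : G (tg t H) = G H by rewrite -GD tgD1 GD.
have sw : \sum_(H : {set T} | t \notin H) G H = \sum_(H : {set T} | t \in H) G H.
  rewrite (reindex_inj (inv_inj (tgK t))) /=.
  apply: eq_big => H; last by move=> _; rewrite Gtg.
  by rewrite /tg; case: ifP => tH; rewrite !inE ?eqxx ?tH.
have E1 : \sum_H wt H * psi H = \sum_(H : {set T} | t \in H) G H.
  rewrite (bigID (fun H : {set T} => t \in H)) /=.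
  rewrite (eq_bigr (fun H => r * G H)); last first.
    by move=> H tH; rewrite ew tH /G mulrA.
  rewrite [X in _ + X](eq_bigr (fun H => (1-r) * G H)); last first.
    by move=> H tH; rewrite ew (negbTE tH) /G mulrA.
  by rewrite -!mulr_sumr sw -mulrDl addrC subrK mul1r.
rewrite E1 mulr_sumr (bigID (fun H : {set T} => t \in H)) /=.
rewrite [X in _ + X]big1; last by move=> H tH; rewrite (negbTE tH) mulr0.
rewrite addr0; apply: eq_bigr => H tH.
by rewrite tH mulr1 ew tH /G mulrA.
Qed.

Lemma lem2 (S : {set T}) (psi : {set T} -> R) : indep S psi ->
  \sum_H wt H * psi H * (S \subset H)%:R = r ^+ #|S| * \sum_H wt H * psi H.
Proof.
move: {2}#|S| (erefl #|S|) => n; elim: n S psi => [|n IH] S psi eS hp.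
  move/eqP: eS; rewrite cards_eq0 => /eqP ->; rewrite cards0 expr0 mul1r.
  by apply: eq_bigr => H _; rewrite sub0set mulr1.
have : (0 < #|S|)%nat by rewrite eS.
rewrite card_gt0 => /set0Pn [t tS].
set S' := S :\ t.
have eS' : #|S'| = n by move: eS; rewrite (cardsD1 t S) tS add1n => -[].
have tS' : t \notin S' by rewrite !inE eqxx.
have eq1 : forall H : {set T}, (S \subset H) = (t \in H) && (S' \subset H).
  move=> H; have e : S = t |: S' by rewrite /S' setD1K.
  by rewrite {1}e subUset sub1set.
pose psi' (H : {set T}) := psi H * (S' \subset H)%:R.
have hp' : indep [set t] psi'.
  move=> H; rewrite /psi' -(indep_sub _ hp); last by rewrite sub1set.
  by rewrite subsetD1 tS' andbT.
rewrite (eq_bigr (fun H => wt H * psi' H * (t \in H)%:R)); last first.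
  move=> H _; rewrite eq1 /psi'.
  by case: (t \in H); case: (S' \subset H); rewrite /= ?mulr1 ?mulr0.
rewrite lem1 //.
rewrite (eq_bigr (fun H => wt H * psi H * (S' \subset H)%:R)); last first.
  by move=> H _; rewrite /psi' mulrA.
rewrite IH //; last first.
  by apply: indep_sub hp; rewrite subD1set.
by rewrite eS eS' exprS mulrA.
Qed.

Lemma lem2c (S : {set T}) (psi : {set T} -> R) : indep S psi ->
  \sum_H wt H * psi H * (1 - (S \subset H)%:R) = (1 - r ^+ #|S|) * \sum_H wt H * psi H.
Proof.
move=> hp; rewrite mulrBl mul1r -lem2 // -sumrB.
by apply: eq_bigr => H _; rewrite mulrBr mulr1.
Qed.

Lemma lem3 (M : {set T}) (U : T -> {set T}) (psi : {set T} -> R) :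
  (forall z z', z \in M -> z' \in M -> z != z' -> [disjoint U z & U z']) ->
  indep (\bigcup_(z in M) U z) psi ->
  \sum_H wt H * psi H * \prod_(z in M) (1 - (U z \subset H)%:R) =
  \prod_(z in M) (1 - r ^+ #|U z|) * \sum_H wt H * psi H.
Proof.
move: {2}#|M| (erefl #|M|) => n; elim: n M psi => [|n IH] M psi eM hd hp.
  move/eqP: eM; rewrite cards_eq0 => /eqP ->; rewrite !big_set0 mul1r.
  by apply: eq_bigr => H _; rewrite big_set0 mulr1.
have : (0 < #|M|)%nat by rewrite eM.
rewrite card_gt0 => /set0Pn [t tM].
set M' := M :\ t.
have eM' : #|M'| = n by move: eM; rewrite (cardsD1 t M) tM add1n => -[].
have sub' : M' \subset M by apply: subsetDl.
pose P' (H : {set T}) : R := \prod_(z in M') (1 - (U z \subset H)%:R).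
pose psi' (H : {set T}) := psi H * P' H.
have hp' : indep (U t) psi'.
  move=> H; rewrite /psi' -(indep_sub _ hp); last by apply: (bigcup_sup t).
  congr (_ * _); apply: eq_bigr => z zM'.
  rewrite subsetD.
  have dj : [disjoint U z & U t].
    by move: zM'; rewrite !inE => /andP [zt zM]; apply: hd.
  by rewrite dj andbT.
rewrite (eq_bigr (fun H => wt H * psi' H * (1 - (U t \subset H)%:R))); last first.
  by move=> H _; rewrite (big_setD1 t) //= /psi' /P' -!mulrA [X in _ * (_ * X)]mulrC.
rewrite lem2c // (big_setD1 t) //= -mulrA; congr (_ * _).
rewrite (eq_bigr (fun H => wt H * psi H * P' H)); last first.
  by move=> H _; rewrite /psi' mulrA.
apply: IH => //.
  by move=> z z' zM z'M; apply: hd; apply: (subsetP sub').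
apply: indep_sub hp; apply/subsetP => x /bigcupP [z zM xz].
by apply/bigcupP; exists z => //; apply: (subsetP sub').
Qed.
End Prob.
Lemma ln43_pos : (0 < ln (4/3))%R.
Proof. rewrite <- ln_1. apply ln_increasing; lra. Qed.

Lemma ln43_lt2 : (ln (4/3) < ln 2)%R.
Proof. apply ln_increasing; lra. Qed.

Lemma L_pos (N : nat) : (2 <= N)%nat -> (0 < log43 (INR N))%R.
Proof.
move=> hN; rewrite /log43. apply Rdiv_lt_0_compat; last exact ln43_pos.
rewrite <- ln_1; apply ln_increasing; first lra.
have : (INR 2 <= INR N)%R by apply le_INR; apply/ssrnat.leP.
simpl; lra.
Qed.

Lemma half_lt (N : nat) (x : R) : (2 <= N)%nat -> (log43 (INR N) < x)%R ->
  (Rpower (/2) x < / INR N)%R.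
Proof.
move=> hN hx.
have hL := L_pos hN.
have hNp : (0 < INR N)%R by have := lt_0_INR N; apply; apply/ssrnat.ltP; case: N hN {hL hx}.
rewrite /Rpower -[X in (_ < / X)%R](exp_ln (INR N)) // -exp_Ropp.
apply exp_increasing.
rewrite ln_Rinv; last lra.
move: hx hL; rewrite /log43 => hx hL.
have h1 := ln43_pos. have h2 := ln43_lt2.
have : (ln (INR N) < x * ln (4/3))%R.
  apply (Rmult_lt_compat_r (ln (4/3))) in hx; last lra.
  move: hx; rewrite /Rdiv Rmult_assoc Rinv_l; last lra.
  by rewrite Rmult_1_r.
have hx0 : (0 < x)%R by lra.
have : (x * ln (4/3) < x * ln 2)%R by apply Rmult_lt_compat_l.
lra.
Qed.

Definition rr (m : nat) : R := Rpower (/2) (/ INR m).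

Lemma rr_pos m : (0 < rr m)%R.
Proof. apply exp_pos. Qed.

Lemma rr_lt1 m : (0 < m)%nat -> (rr m < 1)%R.
Proof.
move=> hm; rewrite /rr /Rpower -exp_0; apply exp_increasing.
have : (0 < INR m)%R by apply lt_0_INR; apply/ssrnat.ltP.
move=> h. rewrite ln_Rinv; last lra.
have := ln_lt_2. have : (0 < / INR m)%R by apply Rinv_0_lt_compat.
nra.
Qed.

Lemma rr_pow m k : (0 < m)%nat -> (rr m ^ k)%R = Rpower (/2) (INR k / INR m).
Proof.
move=> hm; rewrite -Rpower_pow; last exact: rr_pos.
rewrite /rr Rpower_mult; congr Rpower; rewrite /Rdiv Rmult_comm //.
Qed.

Lemma rr_powm m : (0 < m)%nat -> (rr m ^ m)%R = (/2)%R.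
Proof.
move=> hm; rewrite rr_pow // /Rdiv Rinv_r; last first.
  have : (0 < INR m)%R by apply lt_0_INR; apply/ssrnat.ltP. lra.
by rewrite Rpower_1; lra.
Qed.
Section Main.
Variables (d : Order.disp_t) (T : finPOrderType d).
Local Open Scope ring_scope.

Lemma sum_lt (I : finType) (S : {set I}) (f : I -> R) (c : R) :
  (0 < #|S|)%nat -> (forall i, i \in S -> f i < c) -> \sum_(i in S) f i < #|S|%:R * c.
Proof.
move=> /card_gt0P [i0 i0S] h.
rewrite mulr_natl -sumr_const (bigD1 i0) //= [X in _ < X](bigD1 i0) //=.
apply: ltr_leD; first exact: h.
by apply: ler_sum => i /andP [iS _]; apply: ltW; apply: h.
Qed.

Lemma count_real (F : {set {set T}}) (S : {set T}) (c : R) :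
  (0 < #|F|)%nat -> (forall X, X \in F -> ~~ [disjoint X & S]) ->
  (forall p, freq F p < c) -> 1 < #|S|%:R * c.
Proof.
move=> F0 hF hc.
have hS : (0 < #|S|)%nat.
  case/card_gt0P: (F0) => X XF; have := hF X XF; case/pred0Pn => p /andP [_ pS].
  by apply/card_gt0P; exists p.
have hF0 : (0 : R) < #|F|%:R by rewrite ltr0n.
have e p : #|[set X in F | p \in X]|%:R = freq F p * #|F|%:R.
  by rewrite /freq RdivE !INRE divfK // gt_eqF.
have h1 : (#|F|%:R : R) <= \sum_(p in S) (#|[set X in F | p \in X]|%:R : R).
  by rewrite -natr_sum ler_nat count_hit.
have h2 : \sum_(p in S) (#|[set X in F | p \in X]|%:R : R) < #|S|%:R * (c * #|F|%:R).
  under eq_bigr do rewrite e.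
  by apply: sum_lt => // p _; rewrite ltr_pM2r.
have : #|F|%:R < #|S|%:R * c * #|F|%:R by rewrite -mulrA; exact: le_lt_trans h1 h2.
by rewrite -{1}[(#|F|%:R : R)]mul1r ltr_pM2r.
Qed.

Lemma wt_ge0 (r : R) (H : {set T}) : 0 < r -> r < 1 -> 0 <= wt r H.
Proof.
move=> r0 r1; apply: prodr_ge0 => t _; case: (t \in H); first exact: ltW.
by rewrite subr_ge0 ltW.
Qed.

Lemma Z_gt0 (r : R) : 0 < r -> r < 1 -> 0 < \sum_(H : {set T}) wt r H.
Proof.
move=> r0 r1; rewrite (bigD1 set0) //=.
apply: ltr_wpDr; first by apply: sumr_ge0 => H _; apply: wt_ge0.
apply: prodr_gt0 => t _; case: (t \in set0) => //.
by rewrite subr_gt0.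
Qed.

Lemma boundA (X M : {set T}) (r : R) : 0 < r -> r < 1 -> M \subset X -> disj_up M ->
  \sum_(H : {set T}) wt r H * (X \subset Xof H)%:R <=
  (\prod_(z in M) (1 - r ^+ #|upS z|)) * \sum_(H : {set T}) wt r H.
Proof.
move=> r0 r1 sMX dM.
apply: le_trans (_ : \sum_(H : {set T}) wt r H * 1 * \prod_(z in M) (1 - (upS z \subset H)%:R) <= _).
  apply: ler_sum => H _; rewrite mulr1; apply: ler_wpM2l; first exact: wt_ge0.
  case: (boolP (X \subset Xof H)) => h.
    rewrite big1 // => z zM.
    have : z \in Xof H by apply: (subsetP h); apply: (subsetP sMX).
    by rewrite inE => /negbTE ->; rewrite subr0.
  apply: prodr_ge0 => z _; by case: (upS z \subset H); rewrite ?subrr ?subr0.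
rewrite lem3 //.
by under [X in _ * X <= _]eq_bigr do rewrite mulr1.
Qed.

Lemma boundB (Y : {set T}) (r : R) : 0 < r -> r < 1 ->
  \sum_(H : {set T}) wt r H * (Xof H \subset Y)%:R <= r ^+ #|~: Y| * \sum_(H : {set T}) wt r H.
Proof.
move=> r0 r1.
apply: le_trans (_ : \sum_(H : {set T}) wt r H * 1 * (~: Y \subset H)%:R <= _).
  apply: ler_sum => H _; rewrite mulr1; apply: ler_wpM2l; first exact: wt_ge0.
  case: (boolP (Xof H \subset Y)) => h; last by case: (_ \subset _).
  suff -> : ~: Y \subset H by [].
  apply/subsetP => z; rewrite inE => zY.
  have : z \notin Xof H by apply: contra zY; apply: (subsetP h).
  rewrite inE negbK => /subsetP; apply; by rewrite inE.
rewrite lem2 //.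
by under [X in _ * X <= _]eq_bigr do rewrite mulr1.
Qed.

Lemma union_bound (A B : {set {set T}}) (r c : R) :
  0 < r -> r < 1 -> dual_families A B -> (0 < #|A|)%nat ->
  (forall X, X \in A -> \sum_(H : {set T}) wt r H * (X \subset Xof H)%:R < c * \sum_(H : {set T}) wt r H) ->
  (forall Y, Y \in B -> \sum_(H : {set T}) wt r H * (Xof H \subset Y)%:R < c * \sum_(H : {set T}) wt r H) ->
  1 < (#|A| + #|B|)%:R * c.
Proof.
move=> r0 r1 [_ hd] A0 hA hB.
set Z := \sum_(H : {set T}) wt r H.
have Z0 : 0 < Z by apply: Z_gt0.
have h1 : forall H, 1 <= \sum_(X in A) (X \subset Xof H)%:R + \sum_(Y in B) (Xof H \subset Y)%:R :> R.
  move=> H; have [[Y YB sY]|[X XA sX]] := hd _ (@Xof_down d T H).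
    rewrite [X in _ + X](bigD1 Y) //= sY.
    have : 0 <= \sum_(X in A) (X \subset Xof H)%:R :> R by apply: sumr_ge0.
    have : 0 <= \sum_(i in B | i != Y) (Xof H \subset i)%:R :> R by apply: sumr_ge0.
    by move=> a b; rewrite addrCA /= lerDl addr_ge0.
  rewrite (bigD1 X) //= sX.
  have : 0 <= \sum_(X in B) (Xof H \subset X)%:R :> R by apply: sumr_ge0.
  have : 0 <= \sum_(i in A | i != X) (i \subset Xof H)%:R :> R by apply: sumr_ge0.
  by move=> a b; rewrite -addrA /= lerDl addr_ge0.
have h2 : Z <= \sum_(X in A) \sum_(H : {set T}) wt r H * (X \subset Xof H)%:R +
               \sum_(Y in B) \sum_(H : {set T}) wt r H * (Xof H \subset Y)%:R.
  apply: le_trans (_ : \sum_(H : {set T}) wt r H * (\sum_(X in A) (X \subset Xof H)%:R + \sum_(Y in B) (Xof H \subset Y)%:R) <= _).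
    rewrite /Z; apply: ler_sum => H _; rewrite -{1}[wt r H]mulr1.
    by apply: ler_wpM2l; [exact: wt_ge0 | exact: h1].
  rewrite [X in X <= _](eq_bigr (fun H => \sum_(X in A) wt r H * (X \subset Xof H)%:R + \sum_(Y in B) wt r H * (Xof H \subset Y)%:R)); last first.
    by move=> H _; rewrite mulrDr !mulr_sumr.
  by rewrite big_split /= exchange_big [X in _ + X <= _]exchange_big /=.
have h3 : \sum_(X in A) \sum_(H : {set T}) wt r H * (X \subset Xof H)%:R < #|A|%:R * (c * Z).
  by apply: sum_lt.
have h4 : \sum_(Y in B) \sum_(H : {set T}) wt r H * (Xof H \subset Y)%:R <= #|B|%:R * (c * Z).
  rewrite mulr_natl -sumr_const; apply: ler_sum => Y YB; apply: ltW; exact: hB.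
have : Z < (#|A| + #|B|)%:R * c * Z.
  rewrite natrD mulrDl mulrDl -!mulrA.
  apply: le_lt_trans h2 _; apply: ltr_leD => //.
by rewrite -{1}[Z]mul1r ltr_pM2r.
Qed.
Lemma rpow_mono (r : R) (k m : nat) : (0 <= r) -> (r <= 1) -> (k <= m)%nat ->
  (r ^+ m <= r ^+ k).
Proof.
move=> r0 r1 km; rewrite -(subnKC km) GRing.exprD; apply: ler_piMr.
  by apply: exprn_ge0.
by apply: exprn_ile1.
Qed.

End Main.

Lemma twoE : (@GRing.natmul R (@GRing.one R) 2) = IZR 2.
Proof. rewrite GRing.mulr2n -RplusE -R1E. lra. Qed.

Delimit Scope R_scope with R.

Lemma lt_of_div (a k : R) : (0 < a)%R -> (1 < k * (1 / a))%R -> (a < k)%R.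
Proof.
move=> ha h.
have e : (k = k * (1 / a) * a)%R by field; apply: Rgt_not_eq.
set t := (k * (1 / a))%R in h e.
rewrite e; nra.
Qed.


Theorem corollary4 (d : Order.disp_t) (T : finPOrderType d)
    (A B : {set {set T}}) :
  (0 < #|T|)%nat ->
  (forall X, X \in A -> is_downset X) ->
  (forall Y, Y \in B -> is_downset Y) ->
  (0 < #|A|)%nat -> (0 < #|B|)%nat ->
  dual_families A B ->
  let m := max_updown T in
  let N := (#|A| + #|B|)%nat in
  (exists p : T,
      (1 / (INR m * log43 (INR N)) <= freq A p)%R) \/
  (exists p : T,
      (1 / (INR m ^ 2 * log43 (INR N)) <= freq (compl_family B) p)%R).
Proof.
Local Open Scope ring_scope.
move=> T0 hA hB A0 B0 hd m N.
have m0 : (0 < m)%nat.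
  case/card_gt0P: T0 => p _; rewrite /m /max_updown.
  apply: leq_trans (leq_bigmax p); rewrite /updown_size.
  apply: leq_trans (leq_addr _ _); apply/card_gt0P; exists p; by rewrite inE.
have N2 : (2 <= N)%nat by rewrite /N -(addn1 1) leq_add.
have L0 := L_pos N2.
set L := log43 (INR N) in L0 *.
have mR : (0 < INR m)%R by apply: lt_0_INR; apply/ssrnat.ltP.
have NR : (0 < INR N)%R by apply: lt_0_INR; apply/ssrnat.ltP; apply: leq_trans N2.
case: (classic (exists p : T, (1 / (INR m * L) <= freq A p)%R)) => [h|h1]; first by left.
case: (classic (exists p : T, (1 / (INR m ^ 2 * L) <= freq (compl_family B) p)%R))
  => [h|h2]; first by right.
exfalso.
have f1 : forall p, (freq A p < 1 / (INR m * L))%R.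
  by move=> p; apply: Rnot_le_lt => h; apply: h1; exists p.
have f2 : forall p, (freq (compl_family B) p < 1 / (INR m ^ 2 * L))%R.
  by move=> p; apply: Rnot_le_lt => h; apply: h2; exists p.
have sB : forall Y, Y \in B -> (INR m * L < INR #|~: Y|)%R.
  move=> Y YB; apply: lt_of_div; first by apply: Rmult_lt_0_compat.
  rewrite INRE; apply/RltP; apply: (count_real (F := A)) => //.
    by move=> X XA; rewrite -subsets_disjoint; apply: hd.1.
  by move=> p; apply/RltP.
have cB : #|compl_family B| = #|B| by rewrite /compl_family card_imset //; apply: setC_inj.
have sA : forall X, X \in A -> (INR m ^ 2 * L < INR #|X|)%R.
  move=> X XA; apply: lt_of_div.
    by apply: Rmult_lt_0_compat => //; apply: pow_lt.
  rewrite INRE; apply/RltP; apply: (count_real (F := compl_family B)) => //.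
      by rewrite cB.
    move=> X' /imsetP [Y YB ->]; rewrite disjoint_sym -subsets_disjoint.
    by apply: hd.1.
  by move=> p; apply/RltP.
have r0 := rr_pos m.
have r1 := rr_lt1 m0.
have : 1 < (#|A| + #|B|)%:R * (INR N)^-1.
  apply: (union_bound (r := rr m)) => //.
  - by apply/RltP.
  - by apply/RltP.
  - move=> X XA.
    have [M [sMX dM cM]] := greedy X.
    apply: le_lt_trans (@boundA d T X M (rr m) _ _ sMX dM) _; [by apply/RltP | by apply/RltP |].
    rewrite ltr_pM2r; last by apply: Z_gt0; apply/RltP.
    apply: (@le_lt_trans _ _ ((2^-1) ^+ #|M|)).
      rewrite -prodr_const; apply: ler_prod => z _; apply/andP; split.
        rewrite subr_ge0; apply: exprn_ile1; apply/RleP; apply: Rlt_le => //.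
      have : rr m ^+ m <= rr m ^+ #|upS z|.
        apply: rpow_mono; [apply/RleP; apply: Rlt_le => // | apply/RleP; apply: Rlt_le => // | apply: upS_le].
      rewrite -!RpowE rr_powm //.
      move/RleP => hle; apply/RleP. rewrite -RinvE -RminusE -R1E twoE. lra.
    rewrite twoE -[(IZR 2)^-1]/(Rinv (IZR 2)); apply/RltP; rewrite -RpowE -Rpower_pow; last lra.
    apply: half_lt => //.
    have hX := sA X XA.
    have : (INR #|X| <= INR #|M| * (INR m * INR m))%R.
      by rewrite -!mult_INR; apply: le_INR; apply/ssrnat.leP.
    have mm : (0 < INR m * INR m)%R by apply: Rmult_lt_0_compat.
    move: hX; rewrite /= Rmult_1_r => hX hle.
    rewrite -/L.
    have : (L * (INR m * INR m) < INR #|M| * (INR m * INR m))%R.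
      rewrite Rmult_comm; exact: Rlt_le_trans hX hle.
    by apply: Rmult_lt_reg_r.
  - move=> Y YB.
    apply: le_lt_trans (@boundB d T Y (rr m) _ _) _; [by apply/RltP | by apply/RltP |].
    rewrite ltr_pM2r; last by apply: Z_gt0; apply/RltP.
    rewrite -[(INR N)^-1]/(Rinv (INR N)); apply/RltP; rewrite -RpowE rr_pow //.
    apply: half_lt => //.
    have hY := sB Y YB.
    apply: (Rmult_lt_reg_r (INR m)) => //.
    rewrite /Rdiv Rmult_assoc Rinv_l; last lra.
    by rewrite Rmult_1_r Rmult_comm.
rewrite -INRE -/N => /RltP h.
have e : (INR N * / INR N = 1)%R by apply: Rinv_r; lra.
change (Rlt (IZR 1) (Rmult (INR N) (Rinv (INR N)))) in h.
rewrite e in h; lra.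
Qed.
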